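(* Let $q$ be a prime power and $N\ge n\ge1$. Then $\chi_1(N\times n,q)=q^N$.
   Context: $\mathbb{F}_q^{N\times n}$ is the set of $N\times n$ matrices over $\mathbb{F}_q$. An exactly $d$-distance coloring is a map $\Gamma:\mathbb{F}_q^{N\times n}\to\{1,\dots,L\}$ such that $\Gamma(M_1)\ne\Gamma(M_2)$ whenever $\mathrm{Rk}(M_1-M_2)=d$. $\chi_d(N\times n,q)$ denotes the minimum number $L$ of colors in an exactly $d$-distance coloring. *)

(* Defs.v *)
From HB Require Import structures.
From mathcomp Require Import all_boot all_order all_algebra all_field.
Set Implicit Arguments. Unset Strict Implicit. Unset Printing Implicit Defensive.
Import GRing.Theory.
Local Open Scope ring_scope.

(* An exactly d-distance coloring of F^{N x n} with L colors (colors are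
   'I_L, i.e. {0,..,L-1}, in bijection with {1,..,L}): a map Gamma such that
   Gamma M1 <> Gamma M2 whenever rank (M1 - M2) = d. *)
Definition exact_dist_coloring (F : finFieldType) (N n d L : nat)
  (Gamma : 'M[F]_(N, n) -> 'I_L) : bool :=
  [forall M1 : 'M[F]_(N, n), forall M2 : 'M[F]_(N, n),
     (\rank (M1 - M2)%R == d)%N ==> (Gamma M1 != Gamma M2)].

Definition has_exact_dist_coloring (F : finFieldType) (N n d : nat) : pred nat :=
  fun L => [exists Gamma : {ffun 'M[F]_(N, n) -> 'I_L},
              @exact_dist_coloring F N n d L Gamma].

Lemma has_exact_dist_coloring_ex (F : finFieldType) (N n d : nat) :
  (0 < d)%N -> exists L, has_exact_dist_coloring F N n d L.
Proof.
move=> d_gt0; exists #|{: 'M[F]_(N, n)}|; apply/existsP.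
exists [ffun M => enum_rank M]; apply/forallP => M1; apply/forallP => M2.
apply/implyP => /eqP Hr; rewrite !ffunE; apply/negP => /eqP /enum_rank_inj E.
by move: Hr d_gt0; rewrite E subrr mxrank0 => <-.
Qed.

(* Defined for d >= 1 (for d = 0 no coloring exists, since rank (M - M) = 0). *)
Definition chi (F : finFieldType) (N n d : nat) (d_gt0 : (0 < d)%N) : nat :=
  ex_minn (has_exact_dist_coloring_ex F N n d_gt0).

(* Main.v *)
Require Import Defs.
From HB Require Import structures.
From mathcomp Require Import all_boot all_order all_algebra all_field.
Import GRing.Theory.
Local Open Scope ring_scope.

Lemma card_natr0 (F : finFieldType) : (#|F|%:R : F) = 0.
Proof.
have [p pr_p pcharFp] := finPcharP F.
rewrite (card_pprimeChar pcharFp) natrX (pcharf0 pcharFp) expr0n.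
case: (logn _ _) (card_pprimeChar pcharFp) => //= E.
by move: (finNzRing_gt1 F); rewrite E.
Qed.

Lemma ext_exists (F : finFieldType) (N : nat) : (0 < N)%N ->
  exists L : fieldExtType F, \dim {:L} = N.
Proof.
move=> N_gt0; set m := (#|F| ^ N)%N.
have F_gt1 := finNzRing_gt1 F.
have m_gt1 : (1 < m)%N by rewrite /m -(exp1n N) ltn_exp2r.
pose q (R : nzRingType) : {poly R} := 'X^m - 'X.
have Dq R : q R = ('X^(m.-1) - 1) * ('X - 0).
  by rewrite subr0 mulrBl mul1r -exprSr prednK // ltnW.
have /FinSplittingFieldFor[/= L splitLq]: q F != 0.
  by rewrite Dq monic_neq0 ?rpredM ?monicXsubC ?monicXnsubC // -ltnS prednK // ltnW.
rewrite [map_poly _ _]rmorphB rmorphXn /= map_polyX -/(q L) in splitLq.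

pose Fm := FinFieldExtType L.
have /finField_galois_generator[/= a _ Da]: (1 <= {:L})%VS by apply: sub1v.
rewrite dimv1 expn1 in Da.
pose Em := fixedSpace (a ^+ N)%g.
have{splitLq} [zs DqL defL] := splitLq.
have mL0 : (m%:R : L) = 0.
  by rewrite -(rmorph_nat (in_alg L)) /m natrX card_natr0 expr0n gtn_eqF // rmorph0.
have Uzs: uniq zs.
  rewrite -separable_prod_XsubC -(eqp_separable DqL).
  rewrite unlock /q derivB derivXn derivX -scaler_nat mL0 scale0r sub0r.
  apply/Bezout_eq1_coprimepP; exists (0, -1) => /=.
  by rewrite mul0r add0r mulrNN mul1r.
have cardL : #|Fm| = m.
  suffices /eq_card->: Fm =i zs.
    apply: succn_inj; rewrite (card_uniqP _) //= -(size_prod_XsubC _ id).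
    by rewrite -(eqp_size DqL) size_polyDl size_polyXn // size_polyN size_polyX.
  have in_zs: zs =i Em.
    move=> z; rewrite -root_prod_XsubC -(eqp_root DqL) (sameP fixedSpaceP eqP).
    rewrite /root !hornerE subr_eq0 /= /m; congr (_ == z).
    elim: (N) => [|i IHi]; first by rewrite gal_id.
    by rewrite expgSr expnSr exprM IHi galM ?Da ?memvf.
  suffices defEm: Em = {:L}%VS by move=> z; rewrite in_zs defEm memvf.
  apply/eqP; rewrite eqEsubv subvf -defL -[Em]subfield_closed agenvS //.
  by rewrite subv_add sub1v; apply/span_subvP=> z; rewrite in_zs.
exists L.
have := card_vspace (fullv : {vspace finvect_type L}).
rewrite card_vspacef.
move=> H; have H2 : (#|F| ^ \dim {:L})%N = m by rewrite -cardL; exact: (esym H).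
by apply/eqP; rewrite -(eqn_exp2l _ _ F_gt1) H2.
Qed.
Lemma comb0 (F : finFieldType) (L : fieldExtType F) (N : nat)
  (hd : \dim {:L} = N) (c : nat -> F) (m : nat) : (m <= N)%N ->
  \sum_(i < m) c i *: (vbasis {:L})`_i = 0 -> forall i, (i < m)%N -> c i = 0.
Proof.
move=> mN H i im.
have /freeP fr := basis_free (vbasisP {:L}).
pose G (i : nat) := (if (i < m)%N then c i else 0) *: (vbasis {:L})`_i.
have H1 : \sum_(i < m) G i = 0.
  rewrite -[RHS]H; apply: eq_bigr => j _; rewrite /G ltn_ord.
  by [].
rewrite (big_ord_widen N G mN) big_mkcond /= in H1.
have H2 : \sum_(j < \dim {:L}) G j = 0.
  rewrite -(big_mkord xpredT G) hd big_mkord -[RHS]H1; apply: eq_bigr => j _.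
  by rewrite /G; case: ifP => // _; rewrite scale0r.
have := fr (fun j => if (j < m)%N then c j else 0) H2 (Ordinal (leq_trans im (leq_trans mN (eq_leq (esym hd))))).
by rewrite /= im.
Qed.
Lemma ord_ne0 (N : nat) (k : 'I_N.+1) : k != 0 -> (1 <= k)%N.
Proof. by move=> k0; rewrite lt0n; apply: contra k0 => /eqP h; apply/eqP/val_inj. Qed.

Lemma rank1_entry (F : fieldType) (N n : nat) (M : 'M[F]_(N.+1, n.+1)) :
  \rank M = 1%N -> forall i j, M i j = col_ebase M i 0 * row_ebase M 0 j.
Proof.
move=> r1 i j; rewrite -{1}(mulmx_ebase M) r1 mxE (bigD1 0) //= big1 ?addr0.
  rewrite mxE (bigD1 0) //= big1 ?addr0; first by rewrite mxE /= mulr1.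
  by move=> k /ord_ne0 k0; rewrite mxE ltnNge k0 andbF mulr0.
move=> l /ord_ne0 l0; rewrite mxE big1 ?mul0r // => k _.
rewrite mxE; case: (k =P l :> nat) => [E|]; last by rewrite mulr0.
by rewrite ltnNge E l0 andbF mulr0.
Qed.

Theorem proposition4p1 (F : finFieldType) (N n : nat) :
  (1 <= n)%N -> (n <= N)%N -> @chi F N n 1 isT = (#|F| ^ N)%N.
Proof.
move=> n1 nN; case: N nN => [|N'] nN; first by case: n n1 nN => [|n'].
case: n n1 nN => [//|n'] _ nN.
rewrite /chi; case: ex_minnP => L HL Hmin.
apply/eqP; rewrite eqn_leq; apply/andP; split.
  apply: Hmin; apply/existsP.
  have [Lf hd] : exists Lf : fieldExtType F, \dim {:Lf} = N'.+1 := @ext_exists F N'.+1 isT.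
  pose b i := (vbasis {:Lf})`_i.
  pose phi (M : 'M[F]_(N'.+1, n'.+1)) : Lf :=
    \sum_(i < N'.+1) \sum_(j < n'.+1) M i j *: (b i * b j).
  have E : #|finvect_type Lf| = (#|F| ^ N'.+1)%N.
    have := card_vspace (fullv : {vspace finvect_type Lf}); rewrite card_vspacef => ->.
    congr (_ ^ _)%N; exact: hd.
  exists [ffun M => cast_ord E (@enum_rank (finvect_type Lf) (phi M))].
  apply/forallP => M1; apply/forallP => M2; apply/implyP => /eqP r1; rewrite !ffunE.
  apply/negP => /eqP /cast_ord_inj /enum_rank_inj Eq.
  set M := (M1 - M2) in r1.
  have phi0 : phi M = 0.
    rewrite /phi /M -[RHS](subrr (phi M1)) {2}Eq /phi -sumrB; apply: eq_bigr => i _.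
    by rewrite -sumrB; apply: eq_bigr => j _; rewrite !mxE scalerBl.
  pose C := col_ebase M; pose R := row_ebase M.
  have phiE : phi M = (\sum_(i < N'.+1) C i 0 *: b i) * (\sum_(j < n'.+1) R 0 j *: b j).
    rewrite mulr_suml; apply: eq_bigr => i _; rewrite mulr_sumr; apply: eq_bigr => j _.
    by rewrite (@rank1_entry _ _ _ M r1) -scalerAl -scalerAr scalerA.
  have M0 : M = 0 -> False by move=> M0; move: r1; rewrite M0 mxrank0.
  move: phi0; rewrite phiE => /eqP; rewrite mulf_eq0 => /orP[] /eqP H; apply: M0.
    have H' := @comb0 _ _ _ hd (fun k => C (inord k) 0) _ (leqnn _).
    have Cz : forall i, C i 0 = 0.
      move=> i; have := H' _ i (ltn_ord i); rewrite inord_val; apply.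
      by rewrite -[RHS]H; apply: eq_bigr => k _; rewrite inord_val.
    by apply/matrixP => i j; rewrite (@rank1_entry _ _ _ M r1) Cz mul0r mxE.
  have H' := @comb0 _ _ _ hd (fun k => R 0 (inord k)) _ nN.
  have Rz : forall j, R 0 j = 0.
    move=> j; have := H' _ j (ltn_ord j); rewrite inord_val; apply.
    by rewrite -[RHS]H; apply: eq_bigr => k _; rewrite inord_val.
  by apply/matrixP => i j; rewrite (@rank1_entry _ _ _ M r1) Rz mulr0 mxE.
move: HL => /existsP [Gamma /forallP HG].
pose e : 'rV[F]_(n'.+1) := delta_mx 0 0.
pose f (v : 'cV[F]_(N'.+1)) := Gamma (v *m e).
have finj : injective f.
  move=> v w Efw; apply/eqP/negPn/negP => vw.
  have := HG (v *m e); move/forallP/(_ (w *m e))/implyP.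
  rewrite /f in Efw; rewrite Efw eqxx => Hc; suff /Hc : \rank (v *m e - w *m e) == 1%N by [].
  rewrite -mulmxBl; set u := v - w.
  have unz : u != 0 by rewrite subr_eq0.
  rewrite eqn_leq (leq_trans (mxrankM_maxl _ _) (rank_leq_col _)) /= lt0n mxrank_eq0.
  case: (pickP (fun i => u i ord0 != 0)) => [i ui|H].
    apply/eqP => /matrixP /(_ i ord0); rewrite !mxE big_ord1 !mxE eqxx mulr1.
    by move=> h; move: ui; rewrite /u !mxE h eqxx.
  move: unz; rewrite (_ : u = 0) ?eqxx //; apply/matrixP => i j.
  by rewrite ord1 [RHS]mxE; have := H i => /negbFE/eqP.
by have := leq_card f finj; rewrite card_mx card_ord muln1.
Qed.
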